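(* Let $W$ satisfy the mixing assumptions in the context, and consider Algorithm DDS-F (described in the context) with all poll directions unit vectors and a forcing function $\rho:\mathbb{R}^+\to\mathbb{R}^+$, where the stepsizes $\alpha_i^{(k)}$ admit sequences $\{\alpha^{(k)}_{\min}\}$, $\{\alpha^{(k)}_{\max}\}$ such that (i) $\alpha^{(k)}_{\min}\le\alpha^{(k)}_i\le\alpha^{(k)}_{\max}$ for all $i,k$; (ii) $\sum_k(\alpha^{(k)}_{\max})^2<\infty$; (iii) $\sum_k\rho(\alpha^{(k)}_{\min})=\infty$. Then the iterates $\mathbf{x}^{(k)}=[x_1^{(k)};\dots;x_m^{(k)}]\in\mathbb{R}^{mn}$ satisfy $$\lim_{k\to\infty}\left\|\mathbf{x}^{(k)}-\widehat W\mathbf{x}^{(k)}\right\|=0.$$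
   Context: Setting: $m$ agents on an undirected connected graph $\mathcal{G}=(\{1,\dots,m\},\mathcal{E})$; $\mathcal{N}_i=\{j\neq i:(i,j)\in\mathcal{E}\}$. Mixing assumptions on $W=[w_{ij}]\in\mathbb{R}^{m\times m}$ with eigenvalues $\lambda_1(W)\ge\dots\ge\lambda_m(W)$: $W$ symmetric with nonnegative entries, $w_{ij}>0$ iff $i=j$ or $j\in\mathcal{N}_i$; $\lambda_1(W)=1$, $\lambda_2(W)<1$; $W\mathbf{1}=\mathbf{1}$; $-1<\lambda_m(W)\le0$. $\widehat W=W\otimes I_n$. Algorithm DDS-F (local functions $f_i:\mathbb{R}^n\to\mathbb{R}$, poll sets $D_i^{(k)}\subset\mathbb{R}^n$, stepsizes $\alpha_i^{(k)}>0$): start from $x_1^{(0)}=\dots=x_m^{(0)}$. At iteration $k$, each agent $i$ checks whether some $d\in D^{(k)}_i$ satisfies $f_i(x_i^{(k)}+\alpha_i^{(k)}d)\le f_i(x_i^{(k)})-\rho(\alpha_i^{(k)})$. If so, $x_i^{(k+1)}=\sum_{j\in\mathcal{N}_i\cup\{i\}}w_{ij}x_j^{(k)}+\alpha_i^{(k)}d$; otherwise $x_i^{(k+1)}=\sum_{j\in\mathcal{N}_i\cup\{i\}}w_{ij}x_j^{(k)}$. *)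

(* Defs.v *)
From HB Require Import structures.
From mathcomp Require Import all_boot all_order all_algebra.
From mathcomp Require Import all_classical all_reals all_analysis.
Set Implicit Arguments. Unset Strict Implicit. Unset Printing Implicit Defensive.
Import Order.TTheory GRing.Theory Num.Theory.
Import numFieldNormedType.Exports.
Local Open Scope ring_scope.
Local Open Scope classical_set_scope.

Definition eucl_norm (R : realType) (n : nat) (v : 'rV[R]_n) : R :=
  Num.sqrt (\sum_(j < n) v 0 j ^+ 2).

(* Euclidean norm of the stacked vector [x_1; ...; x_m] in R^{mn},
   where X : 'M_(m, n) has row i equal to x_i (i.e. the Frobenius norm). *)
Definition stack_norm (R : realType) (m n : nat) (X : 'M[R]_(m, n)) : R :=
  Num.sqrt (\sum_(i < m) \sum_(j < n) X i j ^+ 2).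

(* (W \otimes I_n) x, written on the row-stacked representation: the block
   of agent i is sum_j w_ij x_j, i.e. the matrix W *m X. *)
Definition kronI_apply (R : realType) (m n : nat) (W : 'M[R]_m)
  (X : 'M[R]_(m, n)) : 'M[R]_(m, n) := W *m X.

(* s is the list of eigenvalues of W (with multiplicity) in nonincreasing
   order: lambda_1(W) = s`_0 >= ... >= lambda_m(W) = s`_(m-1). *)
Definition eigen_seq (R : realType) (m : nat) (W : 'M[R]_m) (s : seq R) : Prop :=
  sorted (>=%R) s /\ char_poly W = \prod_(a <- s) ('X - a%:P).

Definition undirected_connected (m : nat) (adj : rel 'I_m) : Prop :=
  symmetric adj /\ irreflexive adj /\ (forall i j : 'I_m, connect adj i j).

Definition mixing (R : realType) (m : nat) (adj : rel 'I_m) (W : 'M[R]_m) : Prop :=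
  [/\ W^T = W,
      (forall i j, 0 <= W i j),
      (forall i j, 0 < W i j <-> (i == j) || adj i j),
      (exists s : seq R, [/\ eigen_seq W s, s`_0 = 1, s`_1 < 1,
                              -1 < s`_m.-1 & s`_m.-1 <= 0])
    & W *m (const_mx 1 : 'cV[R]_m) = const_mx 1].

Definition forcing_function (R : realType) (rho : R -> R) : Prop :=
  [/\ (forall t, 0 < t -> 0 < rho t),
      (forall s t, 0 < s -> s <= t -> rho s <= rho t)
    & (fun t => rho t / t) @ 0^'+ --> (0 : R)].

Definition dds_step (R : realType) (m n : nat) (adj : rel 'I_m) (W : 'M[R]_m)
  (f : 'I_m -> 'rV[R]_n -> R) (rho : R -> R) (D : set 'rV[R]_n) (a : R)
  (xk : 'I_m -> 'rV[R]_n) (i : 'I_m) (xnext : 'rV[R]_n) : Prop :=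
  let mix := \sum_(j < m | (j == i) || adj i j) W i j *: xk j in
  (exists2 d, D d & f i (xk i + a *: d) <= f i (xk i) - rho a
                    /\ xnext = mix + a *: d)
  \/ ((forall d, D d -> ~ (f i (xk i + a *: d) <= f i (xk i) - rho a))
      /\ xnext = mix).

(* Main.v *)
Require Import Defs.
From HB Require Import structures.
From mathcomp Require Import all_boot all_order all_algebra.
From mathcomp Require Import all_classical all_reals all_analysis.
From mathcomp Require Import ring lra zify.
Import Order.TTheory GRing.Theory Num.Theory.
Import numFieldNormedType.Exports.
Local Open Scope ring_scope.
Local Open Scope classical_set_scope.
Set Implicit Arguments. Unset Strict Implicit. Unset Printing Implicit Defensive.
Lemma scalar_lim (R : realType) (a g : nat -> R) (r K : R) :
  0 <= r -> r < 1 -> 0 <= K -> (forall k, 0 <= a k) -> a 0%N = 0 ->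
  (forall k, 0 <= g k) -> (forall k, a k.+1 <= r * a k + K * g k) ->
  cvg (series g @ \oo) -> a @ \oo --> (0 : R).
Proof.
move=> r0 r1 K0 a0 a00 g0 rec cg.
apply: cvg_series_cvg_0.
have ndg : nondecreasing_seq (series g).
  apply/nondecreasing_seqP => k; rewrite /series /= big_nat_recr //= lerDl //.
have nda : nondecreasing_seq (series a).
  apply/nondecreasing_seqP => k; rewrite /series /= big_nat_recr //= lerDl //.
apply: nondecreasing_is_cvgn => //.
exists (K * limn (series g) / (1 - r)) => _ [N _ <-].
have key : series a N.+1 <= r * series a N + K * series g N.
  rewrite /series /= big_nat_recl // a00 add0r.
  rewrite mulr_sumr mulr_sumr -big_split /=.
  by apply: ler_sum => k _; exact: rec.
have h1 : series a N <= series a N.+1 by apply: nda.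
have h2 : series g N <= limn (series g) by apply: nondecreasing_cvgn_le.
rewrite ler_pdivlMr ?subr_gt0 //.
have : K * series g N <= K * limn (series g) by apply: ler_wpM2l.
nra.
Qed.
Definition Eadj (R : realType) (m : nat) (adj : rel 'I_m) (v : 'I_m -> R) : R :=
  \sum_i \sum_l (if adj i l then (v i - v l) ^+ 2 else 0).

Lemma Eadj_ge0 (R : realType) (m : nat) (adj : rel 'I_m) (v : 'I_m -> R) : 0 <= Eadj adj v.
Proof.
by apply: sumr_ge0 => i _; apply: sumr_ge0 => l _; case: ifP => // _; exact: sqr_ge0.
Qed.

Lemma Eadj_term (R : realType) (m : nat) (adj : rel 'I_m) (v : 'I_m -> R) a b :
  adj a b -> (v a - v b) ^+ 2 <= Eadj adj v.
Proof.
move=> hab; rewrite /Eadj (bigD1 a) //= (bigD1 b) //= hab -addrA lerDl.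
apply: addr_ge0.
  by apply: sumr_ge0 => l _; case: ifP => // _; exact: sqr_ge0.
by apply: sumr_ge0 => i _; apply: sumr_ge0 => l _; case: ifP => // _; exact: sqr_ge0.
Qed.

Lemma path_bound (R : realType) (m : nat) (adj : rel 'I_m) (v : 'I_m -> R) (p : seq 'I_m) (i : 'I_m) :
  path adj i p -> `|v i - v (last i p)| <= (size p)%:R * Num.sqrt (Eadj adj v).
Proof.
elim: p i => [|j p IH] i /=.
  by move=> _; rewrite subrr normr0 mul0r.
move=> /andP [hij hp].
have h1 : `|v i - v j| <= Num.sqrt (Eadj adj v).
  by rewrite -sqrtr_sqr ler_sqrt ?Eadj_ge0 // Eadj_term.
have h2 := IH j hp.
rewrite (_ : v i - v (last j p) = (v i - v j) + (v j - v (last j p))); last by ring.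
apply: (le_trans (ler_normD _ _)).
rewrite -addn1 natrD mulrDl mul1r addrC.
exact: lerD.
Qed.

Lemma pair_bound (R : realType) (m : nat) (adj : rel 'I_m) (v : 'I_m -> R) (i j : 'I_m) :
  connect adj i j -> (v i - v j) ^+ 2 <= (m%:R) ^+ 2 * Eadj adj v.
Proof.
move=> /connectP [p hp ->].
case: (shortenP hp) => p' hp' hu _.
have hs : (size p' <= m)%N.
  have := max_card (mem (i :: p')); rewrite card_ord.
  move/card_uniqP: hu => -> /=; lia.
have hb := path_bound v hp'.
rewrite -(@real_normK _ (v i - v (last i p'))) ?num_real //.
have : `|v i - v (last i p')| <= m%:R * Num.sqrt (Eadj adj v).
  apply: (le_trans hb); apply: ler_wpM2r; first exact: sqrtr_ge0.
  by rewrite ler_nat.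
move=> hle.
have e0 := Eadj_ge0 adj v.
rewrite -[Eadj adj v](sqr_sqrtr e0) -exprMn.
apply: lerXn2r => //; rewrite ?nnegrE //.
Qed.
Lemma eqle (R : realType) (a b : R) : a = b -> a <= b.
Proof. by move->. Qed.

Lemma var_bound (R : realType) (m : nat) (adj : rel 'I_m) (v : 'I_m -> R) :
  (forall i j, connect adj i j) -> \sum_i v i = 0 ->
  2 * \sum_i v i ^+ 2 <= (m%:R) ^+ 3 * Eadj adj v.
Proof.
move=> hc hs.
set S2 := \sum_i v i ^+ 2.
have e : \sum_i \sum_j (v i - v j) ^+ 2 = 2 * m%:R * S2.
  transitivity (\sum_(i < m) (m%:R * v i ^+ 2 + S2)).
    apply: eq_bigr => i _.
    rewrite (eq_bigr (fun j => v i ^+ 2 + v j ^+ 2 - (2 * v i) * v j)); last first.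
      by move=> j _; ring.
    rewrite sumrB big_split /= sumr_const card_ord.
    rewrite -mulr_sumr hs mulr0 subr0 -/S2 mulr_natl //.
  rewrite big_split /= sumr_const card_ord -mulr_sumr.
  rewrite -/S2 -mulr_natl; ring.
have b : \sum_i \sum_j (v i - v j) ^+ 2 <= (m%:R) ^+ 4 * Eadj adj v.
  apply: (le_trans (y := \sum_(i < m) \sum_(j < m) ((m%:R) ^+ 2 * Eadj adj v))).
    by apply: ler_sum => i _; apply: ler_sum => j _; exact: pair_bound.
  rewrite !sumr_const !card_ord; apply: eqle; ring.
rewrite e in b.
have [mp|m0] := ltnP 0 m; last first.
  have -> : S2 = 0 by rewrite /S2; apply: big1 => i _; have := ltn_ord i; lia.
  rewrite mulr0; apply: mulr_ge0; [exact: exprn_ge0 | exact: Eadj_ge0].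
have mp' : (0 : R) < m%:R by rewrite ltr0n.
rewrite -(ler_pM2l mp'); apply: (le_trans (y := 2 * m%:R * S2)); first by apply: eqle; ring.
apply: (le_trans b); apply: eqle; ring.
Qed.
Lemma row_id (R : realType) (m : nat) (a v : 'I_m -> R) :
  \sum_j a j = 1 ->
  2 * \sum_j a j * v j ^+ 2 =
  2 * (\sum_j a j * v j) ^+ 2 + \sum_j \sum_l a j * a l * (v j - v l) ^+ 2.
Proof.
move=> ha.
set S := \sum_j a j * v j ^+ 2; set T := \sum_j a j * v j.
have inner : forall j, \sum_l a j * a l * (v j - v l) ^+ 2 =
    a j * v j ^+ 2 + a j * S - 2 * (a j * v j) * T.
  move=> j.
  rewrite (eq_bigr (fun l => a l * (a j * v j ^+ 2) + a j * (a l * v l ^+ 2)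
        - (2 * (a j * v j)) * (a l * v l))); last by move=> l _; ring.
  rewrite sumrB big_split /= -mulr_suml ha mul1r -mulr_sumr -mulr_sumr //.
rewrite (eq_bigr _ (fun j _ => inner j)).
rewrite sumrB big_split /= -mulr_suml ha mul1r -mulr_suml -/S.
rewrite -mulr_sumr -/T; ring.
Qed.
Definition Dterm (R : realType) (m : nat) (W : 'M[R]_m) (v : 'I_m -> R) i :=
  \sum_j \sum_l W i j * W i l * (v j - v l) ^+ 2.

Lemma Dterm_ge0 (R : realType) (m : nat) (W : 'M[R]_m) (v : 'I_m -> R) i :
  (forall i j, 0 <= W i j) -> 0 <= Dterm W v i.
Proof.
move=> h; apply: sumr_ge0 => j _; apply: sumr_ge0 => l _.
by apply: mulr_ge0; [apply: mulr_ge0 | apply: sqr_ge0].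
Qed.

Lemma key_id (R : realType) (m : nat) (W : 'M[R]_m) (v : 'I_m -> R) :
  (forall i, \sum_j W i j = 1) -> (forall j, \sum_i W i j = 1) ->
  2 * \sum_i (\sum_j W i j * v j) ^+ 2 + \sum_i Dterm W v i = 2 * \sum_j v j ^+ 2.
Proof.
move=> hr hc.
rewrite mulr_sumr -big_split /=.
rewrite (eq_bigr (fun i => 2 * \sum_j W i j * v j ^+ 2)); last first.
  by move=> i _; rewrite (row_id v (hr i)).
rewrite -mulr_sumr exchange_big /=; congr (2 * _).
by apply: eq_bigr => j _; rewrite -mulr_suml hc mul1r.
Qed.

Lemma vec_nonexp (R : realType) (m : nat) (W : 'M[R]_m) (v : 'I_m -> R) :
  (forall i j, 0 <= W i j) ->
  (forall i, \sum_j W i j = 1) -> (forall j, \sum_i W i j = 1) ->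
  \sum_i (\sum_j W i j * v j) ^+ 2 <= \sum_j v j ^+ 2.
Proof.
move=> h0 hr hc; have k := key_id v hr hc.
have : 0 <= \sum_i Dterm W v i by apply: sumr_ge0 => i _; exact: Dterm_ge0.
lra.
Qed.

Lemma vec_contr (R : realType) (m : nat) (adj : rel 'I_m) (W : 'M[R]_m) (v : 'I_m -> R) (d : R) :
  (forall i j, connect adj i j) ->
  (forall i j, 0 <= W i j) ->
  (forall i, \sum_j W i j = 1) -> (forall j, \sum_i W i j = 1) ->
  0 < d -> (forall i l, adj i l -> d <= W i i * W i l) ->
  \sum_i v i = 0 ->
  \sum_i (\sum_j W i j * v j) ^+ 2 <= (1 - d / ((m%:R) ^+ 3 + 1)) * \sum_j v j ^+ 2.
Proof.
move=> hcon h0 hr hc dp hd hs.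
have k := key_id v hr hc.
have vb := var_bound hcon hs.
have E0 := Eadj_ge0 adj v.
have DE : d * Eadj adj v <= \sum_i Dterm W v i.
  rewrite /Eadj mulr_sumr; apply: ler_sum => i _.
  apply: (le_trans (y := \sum_l W i i * W i l * (v i - v l) ^+ 2)).
    rewrite mulr_sumr; apply: ler_sum => l _.
    case: ifP => hil; last first.
      by rewrite mulr0; apply: mulr_ge0; [apply: mulr_ge0 | apply: sqr_ge0].
    by apply: ler_wpM2r; [apply: sqr_ge0 | apply: hd].
  rewrite /Dterm [X in _ <= X](bigD1 i) //= lerDl.
  apply: sumr_ge0 => j _; apply: sumr_ge0 => l _.
  by apply: mulr_ge0; [apply: mulr_ge0 | apply: sqr_ge0].
set M := (m%:R) ^+ 3 : R.
have M0 : 0 <= M by apply: exprn_ge0.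
set S := \sum_j v j ^+ 2.
have S0 : 0 <= S by apply: sumr_ge0 => j _; apply: sqr_ge0.
rewrite -/S in k vb.
rewrite -/M in vb.
have h1 : 2 * S <= (M + 1) * Eadj adj v by rewrite mulrDl mul1r; lra.
have h2 : 2 * d * S <= (M + 1) * (d * Eadj adj v) by nra.
set T := \sum_i (\sum_j W i j * v j) ^+ 2.
rewrite -/T in k.
have h3 : d * S / (M + 1) <= S - T.
  rewrite ler_pdivrMr ?ltr_wpDl //.
  have eD : \sum_i Dterm W v i = 2 * S - 2 * T by lra.
  have h4 : (M + 1) * (d * Eadj adj v) <= (M + 1) * (2 * S - 2 * T).
    by rewrite -eD; apply: ler_wpM2l => //; lra.
  have -> : (S - T) * (M + 1) = ((M + 1) * (2 * S - 2 * T)) / 2 by field.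
  lra.
rewrite mulrBl mul1r mulrAC; lra.
Qed.
Definition sq (R : realType) (m n : nat) (Z : 'M[R]_(m, n)) : R :=
  \sum_i \sum_j Z i j ^+ 2.

Lemma sq_ge0 (R : realType) (m n : nat) (Z : 'M[R]_(m, n)) : 0 <= sq Z.
Proof. by apply: sumr_ge0 => i _; apply: sumr_ge0 => j _; apply: sqr_ge0. Qed.

Lemma sq_exch (R : realType) (m n : nat) (Z : 'M[R]_(m, n)) :
  sq Z = \sum_j \sum_i Z i j ^+ 2.
Proof. by rewrite /sq exchange_big. Qed.

Lemma mat_nonexp (R : realType) (m n : nat) (W : 'M[R]_m) (Z : 'M[R]_(m, n)) :
  (forall i j, 0 <= W i j) ->
  (forall i, \sum_j W i j = 1) -> (forall j, \sum_i W i j = 1) ->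
  sq (W *m Z) <= sq Z.
Proof.
move=> h0 hr hc; rewrite !sq_exch; apply: ler_sum => c _.
rewrite (eq_bigr (fun i => (\sum_j W i j * Z j c) ^+ 2)); last first.
  by move=> i _; rewrite mxE.
exact: (vec_nonexp (fun j => Z j c) h0 hr hc).
Qed.

Lemma mat_contr (R : realType) (m n : nat) (adj : rel 'I_m) (W : 'M[R]_m) (d : R)
  (Z : 'M[R]_(m, n)) :
  (forall i j, connect adj i j) ->
  (forall i j, 0 <= W i j) ->
  (forall i, \sum_j W i j = 1) -> (forall j, \sum_i W i j = 1) ->
  0 < d -> (forall i l, adj i l -> d <= W i i * W i l) ->
  (forall c, \sum_i Z i c = 0) ->
  sq (W *m Z) <= (1 - d / ((m%:R) ^+ 3 + 1)) * sq Z.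
Proof.
move=> hcon h0 hr hc dp hd hs; rewrite !sq_exch mulr_sumr; apply: ler_sum => c _.
rewrite (eq_bigr (fun i => (\sum_j W i j * Z j c) ^+ 2)); last first.
  by move=> i _; rewrite mxE.
exact: (vec_contr hcon h0 hr hc dp hd (hs c)).
Qed.

Lemma sq_add (R : realType) (m n : nat) (A B : 'M[R]_(m, n)) (e : R) :
  0 < e -> sq (A + B) <= (1 + e) * sq A + (1 + e^-1) * sq B.
Proof.
move=> ep; rewrite /sq !mulr_sumr -big_split /=; apply: ler_sum => i _.
rewrite !mulr_sumr -big_split /=; apply: ler_sum => j _.
rewrite mxE.
have h : 0 <= (e * A i j - B i j) ^+ 2 / e by apply: divr_ge0; [apply: sqr_ge0 | lra].
have -> : (1 + e) * A i j ^+ 2 + (1 + e^-1) * B i j ^+ 2 =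
   (A i j + B i j) ^+ 2 + (e * A i j - B i j) ^+ 2 / e.
  by field; rewrite gt_eqF.
lra.
Qed.

Lemma sqN (R : realType) (m n : nat) (A : 'M[R]_(m, n)) : sq (- A) = sq A.
Proof.
by apply: eq_bigr => i _; apply: eq_bigr => j _; rewrite mxE sqrrN.
Qed.

Lemma colsum_IW (R : realType) (m n : nat) (W : 'M[R]_m) (Z : 'M[R]_(m, n)) :
  (forall j, \sum_i W i j = 1) -> forall c, \sum_i (Z - W *m Z) i c = 0.
Proof.
move=> hc c.
rewrite (eq_bigr (fun i => Z i c - \sum_l W i l * Z l c)); last first.
  by move=> i _; rewrite !mxE.
rewrite sumrB exchange_big /=.
rewrite [X in _ - X](eq_bigr (fun l => Z l c)); first by rewrite subrr.
by move=> l _; rewrite -mulr_suml hc mul1r.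
Qed.
Lemma rec_id (R : realType) (m n : nat) (W : 'M[R]_m) (A B : 'M[R]_(m, n)) :
  B - W *m B = W *m (A - W *m A) + ((B - W *m A) - W *m (B - W *m A)).
Proof.
rewrite !mulmxBr.
set p := W *m A; set q := W *m p; set r := W *m B.
apply/matrixP => i j; rewrite !mxE; ring.
Qed.

Lemma exists_delta (R : realType) (T : finType) (P : pred T) (f : T -> R) :
  (forall x, P x -> 0 < f x) ->
  exists d, [/\ 0 < d, d <= 1 & forall x, P x -> d <= f x].
Proof.
move=> hf.
suff : forall s : seq T, exists d, [/\ 0 < d, d <= 1 & forall x, x \in s -> P x -> d <= f x].
  case/(_ (enum T)) => d [d0 d1 hd]; exists d; split => // x; apply: hd; by rewrite mem_enum.
elim => [|y s [d [d0 d1 hd]]].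
  by exists 1; split => //.
case Py : (P y).
  exists (Num.min d (f y)); split.
  - by rewrite lt_min d0 hf.
  - by rewrite ge_min d1.
  - move=> x; rewrite inE => /orP [/eqP -> _|xs Px].
      by rewrite ge_min lexx orbT.
    by rewrite ge_min hd.
exists d; split => // x; rewrite inE => /orP [/eqP -> |xs Px]; first by rewrite Py.
exact: hd.
Qed.
Unset Implicit Arguments.
Theorem theorem2 (R : realType) (m n : nat) (adj : rel 'I_m) (W : 'M[R]_m)
  (f : 'I_m -> 'rV[R]_n -> R) (rho : R -> R)
  (D : nat -> 'I_m -> set 'rV[R]_n) (alpha : nat -> 'I_m -> R)
  (amin amax : nat -> R) (x : nat -> 'I_m -> 'rV[R]_n) :
  undirected_connected adj ->
  mixing adj W ->
  forcing_function rho ->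
  (forall k i d, D k i d -> eucl_norm d = 1) ->
  (forall k i, 0 < alpha k i) ->
  (forall k, 0 < amin k) ->
  (forall k i, amin k <= alpha k i /\ alpha k i <= amax k) ->
  cvg ([series amax k ^+ 2]_k @ \oo) ->
  [series rho (amin k)]_k @ \oo --> +oo ->
  (forall i j, x 0%N i = x 0%N j) ->
  (forall k i, dds_step adj W f rho (D k i) (alpha k i) (x k) i (x k.+1 i)) ->
  (fun k => stack_norm (\matrix_(i, j) x k i 0 j
                        - kronI_apply W (\matrix_(i, j) x k i 0 j)))
    @ \oo --> (0 : R).
Proof.
move=> [_ [_ hcon]] [hT h0 hpos _ h1] _ hD halpha _ hamm hcvg _ hx0 hstep.
have hr : forall i, \sum_j W i j = 1.
  move=> i; have := congr1 (fun M : 'M[R]_(m, 1) => M i 0) h1; rewrite !mxE /= => <-.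
  by apply: eq_bigr => j _; rewrite mxE mulr1.
have hWs : forall i j, W i j = W j i.
  by move=> i j; have := congr1 (fun M : 'M[R]_m => M j i) hT; rewrite mxE => ->.
have hc : forall j, \sum_i W i j = 1.
  by move=> j; rewrite -(hr j); apply: eq_bigr => i _; rewrite hWs.
have hf : forall p : 'I_m * 'I_m, adj p.1 p.2 -> 0 < W p.1 p.1 * W p.1 p.2.
  move=> [i l] /= hil; apply: mulr_gt0; apply/hpos; by rewrite ?eqxx ?hil ?orbT.
have [d [d0 d1 hd]] := exists_delta hf.
have hd' : forall i l, adj i l -> d <= W i i * W i l by move=> i l h; exact: (hd (i, l)).
set X := fun k => \matrix_(i, j) x k i 0 j : 'M[R]_(m, n).
set Y := fun k => X k - W *m X k.
set E := fun k => X k.+1 - W *m X k.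
have hW0 : forall i l, ~~ ((l == i) || adj i l) -> W i l = 0.
  move=> i l hn; apply/eqP; rewrite eq_le h0 andbT leNgt; apply/negP => /hpos.
  by rewrite eq_sym (negbTE hn).
have hE : forall k, sq (E k) <= m%:R * amax k ^+ 2.
  move=> k; apply: (le_trans (y := \sum_(i < m) amax k ^+ 2)); last first.
    by rewrite sumr_const card_ord mulr_natl.
  apply: ler_sum => i _.
  have mixE : forall j, (\sum_(l < m | (l == i) || adj i l) W i l *: x k l) 0 j
      = \sum_l W i l * x k l 0 j.
    move=> j; rewrite summxE big_mkcond /=; apply: eq_bigr => l _.
    case: ifP => h; first by rewrite mxE.
    by rewrite hW0 ?h // mul0r.
  have Eij : forall j, E k i j = x k.+1 i 0 j - \sum_l W i l * x k l 0 j.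
    move=> j; rewrite /E /X !mxE; congr (_ - _).
    by apply: eq_bigr => l _; rewrite mxE.
  rewrite (eq_bigr (fun j => (x k.+1 i 0 j - \sum_l W i l * x k l 0 j) ^+ 2)); last first.
    by move=> j _; rewrite Eij.
  have [_ ham] := hamm k i; have hal := halpha k i.
  case: (hstep k i) => [[dd Ddd [_ ->]] | [_ ->]].
  - rewrite (eq_bigr (fun j => alpha k i ^+ 2 * dd 0 j ^+ 2)); last first.
      move=> j _; rewrite mxE [X in X 0 j]/= mxE mixE; ring.
    rewrite -mulr_sumr.
    have hn := hD k i dd Ddd; rewrite /eucl_norm in hn.
    have -> : \sum_j dd 0 j ^+ 2 = 1.
      rewrite -(@sqr_sqrtr _ (\sum_j dd 0 j ^+ 2)) ?hn ?expr1n //.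
      by apply: sumr_ge0 => j _; apply: sqr_ge0.
    rewrite mulr1; apply: lerXn2r; rewrite ?nnegrE //; lra.
  - rewrite (eq_bigr (fun j => 0)); last by move=> j _; rewrite mixE subrr expr0n.
    by rewrite big1 // sqr_ge0.
set c := d / ((m%:R) ^+ 3 + 1).
have M1 : (1 : R) <= (m%:R) ^+ 3 + 1 by rewrite lerDr exprn_ge0.
have c0 : 0 < c by apply: divr_gt0 => //; lra.
have c1 : c <= 1 by rewrite ler_pdivrMr ?mul1r; lra.
set e := c / 2.
have e0 : 0 < e by rewrite /e; lra.
set r := (1 + e) * (1 - c).
have r0 : 0 <= r by apply: mulr_ge0; lra.
have r1 : r < 1 by rewrite /r /e; nra.
set K := (1 + e^-1) * (4 * m%:R).
have K0 : 0 <= K.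
  apply: mulr_ge0; last by apply: mulr_ge0; [lra | apply: ler0n].
  have ie0 : 0 < e^-1 by rewrite invr_gt0.
  lra.
have Y0 : sq (Y 0%N) = 0.
  apply: big1 => i _; apply: big1 => j _.
  rewrite /Y /X !mxE.
  rewrite (eq_bigr (fun l => W i l * x 0%N i 0 j)); last first.
    by move=> l _; rewrite mxE (hx0 l i).
  by rewrite -mulr_suml hr mul1r subrr expr0n.
have rec : forall k, sq (Y k.+1) <= r * sq (Y k) + K * amax k ^+ 2.
  move=> k.
  have -> : Y k.+1 = W *m Y k + (E k - W *m E k) by exact: rec_id.
  apply: (le_trans (sq_add _ _ e0)).
  have hA : sq (W *m Y k) <= (1 - c) * sq (Y k).
    by apply: (mat_contr hcon h0 hr hc d0 hd'); apply: colsum_IW.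
  have hB : sq (E k - W *m E k) <= 4 * (m%:R * amax k ^+ 2).
    apply: (le_trans (sq_add _ _ ltr01)); rewrite sqN invr1.
    have := mat_nonexp (E k) h0 hr hc; have := hE k; have := sq_ge0 (E k). lra.
  have ie0 : 0 < e^-1 by rewrite invr_gt0.
  have ie : 0 <= 1 + e^-1 by lra.
  rewrite /r /K -mulrA -mulrA.
  apply: lerD; apply: ler_wpM2l => //; lra.
have ha : (fun k => sq (Y k)) @ \oo --> (0 : R).
  apply: (scalar_lim (g := fun k => amax k ^+ 2) r0 r1 K0) => //.
  - by move=> k; exact: sq_ge0.
  - by move=> k; exact: sqr_ge0.
have := continuous_cvg _ (@sqrt_continuous R 0) ha.
rewrite sqrtr0; exact.
Qed.
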